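(* If $p$ is an odd prime then $\mathcal{D}_p\sim(1-A_p^2)^{\frac{p-3}{2}}$; if $p$ is twice an odd prime then $\mathcal{D}_p\sim\sqrt2\,(1+\alpha_p^4)^{\frac{p/2-3}{2}}$.
   Context: $\alpha_p=e^{2\pi i/(4p)}$, $A_p=\alpha_p^2$; $k_p=\mathbb{Z}[A_p,1/p]$ if $p\equiv-1\pmod 4$, $\mathbb{Z}[\alpha_p,1/p]$ if $p\equiv1,2\pmod4$; $\mathcal{O}_p$ its ring of integers. $\mathcal{D}_p=\langle S^3_\flat\rangle_p^{-1}$ where $\langle\ \rangle_p$ is the Blanchet–Habegger–Masbaum–Vogel quantum invariant at $A=A_p$ and $S^3_\flat$ is $S^3$ with weight $0$. For $a,b\in\mathcal{O}_p$ (or nonzero elements of its fraction field), $a\sim b$ means $a/b$ is a unit of $\mathcal{O}_p$. *)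

(* Defs.v *)
From mathcomp Require Import all_boot all_order all_algebra.
From mathcomp Require Import all_field.
Set Implicit Arguments. Unset Strict Implicit. Unset Printing Implicit Defensive.
Import Order.TTheory GRing.Theory Num.Theory.
Local Open Scope ring_scope.

(* alpha_p = e^{2 pi i/(4p)}: the (2p)-th root of -1 with minimal
   non-negative argument (algC's n.-root convention). *)
Definition alpha (p : nat) : algC := (2 * p)%N.-root (-1).
Definition Ap (p : nat) : algC := alpha p ^+ 2.

Definition qint (A : algC) (n : nat) : algC :=
  (A ^+ (2 * n) - A ^- (2 * n)) / (A ^+ 2 - A ^- 2).

(* Kauffman bracket of the unknot coloured by the Jones-Wenzl idempotent e_i *)
Definition bracket_e (A : algC) (i : nat) : algC := (-1) ^+ i * qint A i.+1.

(* <Omega_p> = <unknot coloured by omega_p> (BHMV):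
   p odd  : omega_p = sum_{j=0}^{(p-3)/2} <e_{2j}> e_{2j}
   p even : omega_p = sum_{i=0}^{p/2-2} <e_i> e_i          *)
Definition Omega (p : nat) : algC :=
  if odd p then \sum_(j < (p.-1)./2) bracket_e (Ap p) (2 * j) ^+ 2
  else \sum_(i < p./2 - 1) bracket_e (Ap p) i ^+ 2.

(* a ~ b : a/b is a unit of O_p.  Since a/b lies in the cyclotomic field,
   it is a unit of its ring of integers iff a/b and b/a are algebraic
   integers. *)
Definition assoc (a b : algC) : bool :=
  [&& a != 0, b != 0, a / b \in Aint & b / a \in Aint].

(* Main.v *)
Require Import Defs.
From mathcomp Require Import all_boot all_order all_algebra.
From mathcomp Require Import all_field.
From mathcomp Require Import zify ring.
Import Order.TTheory GRing.Theory Num.Theory.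
Local Open Scope ring_scope.
Lemma norm1_of (n : nat) (y : algC) : (0 < n)%N -> y ^+ n = -1 -> `|y| = 1.
Proof.
move=> n0 yn; apply/eqP; rewrite -(pexpr_eq1 n0) ?normr_ge0 //.
by rewrite -normrX yn normrN normr1.
Qed.

Lemma Re_sqr (w : algC) : `|w| = 1 -> 'Re (w ^+ 2) = 2 * 'Re w ^+ 2 - 1.
Proof.
move=> w1; have := normC2_Re_Im w; rewrite w1 expr1n => h.
rewrite expr2 ReM -!expr2.
have -> : 'Im w ^+ 2 = 1 - 'Re w ^+ 2 by rewrite h addrC addKr.
by rewrite opprB addrA -mulr2n mulr_natl.
Qed.

Lemma Re0_sqr (w : algC) : `|w| = 1 -> 'Re w = 0 -> w ^+ 2 = -1.
Proof.
move=> w1 r0; have := normC2_Re_Im w; rewrite w1 expr1n r0 expr0n add0r => h.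
rewrite [w]Crect r0 add0r exprMn sqrCi -h mulN1r //.
Qed.

Lemma exists_good n (a : algC) : (5 < n)%N -> a ^+ n = -1 ->
  exists y : algC, y ^+ n = -1 /\ 0 < 'Re (y ^+ 2).
Proof.
move=> n5 an; have n0 : (0 < n)%N by apply: leq_trans n5.
have [z pz] := C_prim_root_exists n0.
have zn : z ^+ n = 1 by apply/eqP; rewrite -(prim_order_dvd pz).
case: (boolP [exists k : 'I_n, 0 < 'Re ((a * z ^+ k) ^+ 2)]).
  case/existsP=> k hk; exists (a * z ^+ k); split=> //.
  by rewrite exprMn an -exprM mulnC exprM zn expr1n mulr1.
rewrite negb_exists => /forallP hall.
have hle : forall k : 'I_n, 0 <= - 'Re ((a * z ^+ k) ^+ 2).
  move=> k; rewrite oppr_ge0 real_leNgt ?hall ?Creal_Re //.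
have hsum : \sum_(k < n) - 'Re ((a * z ^+ k) ^+ 2) = 0.
  rewrite sumrN -raddf_sum /=.
  have -> : \sum_(k < n) (a * z ^+ k) ^+ 2 = a ^+ 2 * \sum_(k < n) (z ^+ 2) ^+ k.
    rewrite mulr_sumr; apply: eq_bigr => k _.
    by rewrite exprMn -!exprM mulnC.
  have z2 : z ^+ 2 != 1 by rewrite -(prim_order_dvd pz); apply/negP => /dvdn_leq; lia.
  have : (z ^+ 2 - 1) * \sum_(k < n) (z ^+ 2) ^+ k = 0.
    by rewrite -subrX1 -exprM mulnC exprM zn expr1n subrr.
  move/eqP; rewrite mulf_eq0 subr_eq0 (negPf z2) /= => /eqP ->.
  by rewrite mulr0 raddf0 oppr0.
have h0 := psumr_eq0P (fun k _ => hle k) hsum.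
have n1 : (1 < n)%N by apply: leq_trans n5.
have e0 := h0 (Ordinal n0) isT; have e1 := h0 (Ordinal n1) isT.
move: e0 e1 => /= /eqP; rewrite oppr_eq0 expr0 mulr1 => /eqP e0 /eqP.
rewrite oppr_eq0 expr1 => /eqP e1.
have a1 := norm1_of _ _ n0 an.
have az1 : `|a * z| = 1.
  apply: (norm1_of _ _ n0); by rewrite exprMn an zn mulr1.
have A2 : `|a ^+ 2| = 1 by rewrite normrX a1 expr1n.
have AZ2 : `|(a * z) ^+ 2| = 1 by rewrite normrX az1 expr1n.
have f0 := Re0_sqr _ A2 e0; have f1 := Re0_sqr _ AZ2 e1.
move: f1; rewrite [(a * z) ^+ 2]exprMn exprMn f0 -exprM => /eqP.
rewrite -{2}[-1]mulr1 (inj_eq (mulfI _)) ?oppr_eq0 ?oner_eq0 // => /eqP z4.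
have : (n %| 2 * 2)%N by rewrite (prim_order_dvd pz) z4.
by move/dvdn_leq; lia.
Qed.

Lemma Re_m1 : 'Re (-1 : algC) = -1.
Proof. by rewrite raddfN /=; congr (- _); apply/Creal_ReP; rewrite rpred1. Qed.

Lemma alpha8 n : (5 < n)%N -> ~~ odd n -> (n.-root (-1 : algC)) ^+ 8 != 1.
Proof.
move=> n5 ev; set a := n.-root (-1).
have n0 : (0 < n)%N by apply: leq_trans n5.
have an : a ^+ n = -1 by rewrite /a rootCK.
have [y [yn ry]] := exists_good _ _ n5 an.
have y1nn : `|y| = 1 := norm1_of _ _ n0 yn.
have Rey0 : 'Re y != 0.
  apply/eqP => r0; move: ry; rewrite (Re0_sqr _ y1nn r0) Re_m1.
  by rewrite ltr0N1.
pose y1 := if 0 < 'Re y then y else - y.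
have evN : forall x : algC, (- x) ^+ n = x ^+ n.
  by move=> x; rewrite exprNn -signr_odd (negPf ev) expr0 mul1r.
have y1n : y1 ^+ n = -1 by rewrite /y1; case: ifP; rewrite ?evN.
have y1sq : y1 ^+ 2 = y ^+ 2 by rewrite /y1; case: ifP; rewrite ?sqrrN.
have Rey1 : 0 < 'Re y1.
  rewrite /y1; case: ifP => // h; rewrite raddfN /= oppr_gt0.
  by rewrite real_ltNge ?Creal_Re ?rpred0 // le_eqVlt negb_or eq_sym Rey0 h.
pose y2 := if 0 <= 'Im y1 then y1 else y1^*.
have y2n : y2 ^+ n = -1.
  by rewrite /y2; case: ifP => // _; rewrite -rmorphXn y1n rmorphN1.
have Rey2 : 'Re y2 = 'Re y1 by rewrite /y2; case: ifP; rewrite ?Re_conj.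
have Im2 : 0 <= 'Im y2.
  rewrite /y2; case: ifP => // h; rewrite Im_conj oppr_ge0.
  by rewrite real_leNgt ?Creal_Im ?rpred0 // lt_neqAle negb_and h orbT.
have ry2 : 0 < 'Re (y2 ^+ 2).
  by rewrite /y2; case: ifP; rewrite ?y1sq // -rmorphXn Re_conj y1sq.
have hmax : 'Re y2 <= 'Re a := rootC_Re_max n0 y2n Im2.
have y2nn : `|y2| = 1 := norm1_of _ _ n0 y2n.
have a1 : `|a| = 1 := norm1_of _ _ n0 an.
apply/negP => a8.
have b4 : (a ^+ 2) ^+ 4 = 1 by rewrite -exprM; apply/eqP.
have b1 : a ^+ 2 != 1.
  apply/eqP => b1; move: an.
  rewrite -[n](odd_double_half n) (negPf ev) add0n -muln2 mulnC exprM b1 expr1n.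
  by move/eqP; rewrite -subr_eq0 opprK -(natrD _ 1 1) pnatr_eq0.
have Rb : 'Re (a ^+ 2) <= 0.
  have : (a ^+ 2 - 1) * ((a ^+ 2 + 1) * ((a ^+ 2) ^+ 2 + 1)) = 0.
    have -> : (a ^+ 2 - 1) * ((a ^+ 2 + 1) * ((a ^+ 2) ^+ 2 + 1)) = (a ^+ 2) ^+ 4 - 1 by ring.
    by rewrite b4 subrr.
  move/eqP; rewrite mulf_eq0 subr_eq0 (negPf b1) /= mulf_eq0 => /orP[].
    by rewrite addr_eq0 => /eqP ->; rewrite Re_m1 lerN10.
  rewrite addr_eq0 => /eqP h.
  have b1n : `|a ^+ 2| = 1 by rewrite normrX a1 expr1n.
  have := Re_sqr _ b1n; rewrite h Re_m1 => /eqP.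
  rewrite eq_sym subr_eq addNr mulf_eq0 pnatr_eq0 /= sqrf_eq0 => /eqP ->.
  by [].
have := Re_sqr _ a1; have := Re_sqr _ y2nn.
move=> e2 e1; move: Rb ry2; rewrite e1 e2 => h1 h2.
have : 'Re y2 ^+ 2 <= 'Re a ^+ 2.
  by rewrite !expr2 ler_pM // Rey2 ltW.
move=> h3.
have : 2 * 'Re y2 ^+ 2 - 1 <= 2 * 'Re a ^+ 2 - 1.
  by rewrite lerB // ler_wpM2l.
move=> h4; have := lt_le_trans h2 (le_trans h4 h1).
by rewrite ltxx.
Qed.

Definition isU (u : algC) := [&& u != 0, u \in Aint & u^-1 \in Aint].

Lemma isU_mul u v : isU u -> isU v -> isU (u * v).
Proof.
case/and3P=> u0 ua ui /and3P[v0 va vi]; apply/and3P; split.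
- by rewrite mulf_neq0.
- by rewrite rpredM.
- by rewrite invfM rpredM.
Qed.

Lemma isU_inv u : isU u -> isU u^-1.
Proof. by case/and3P=> u0 ua ui; apply/and3P; rewrite invr_eq0 invrK. Qed.

Lemma isU_prod (I : finType) (F : I -> algC) : (forall i, isU (F i)) -> isU (\prod_i F i).
Proof.
move=> h; apply: (big_ind isU).
- by apply/and3P; rewrite oner_eq0 invr1 rpred1.
- exact: isU_mul.
- by move=> i _; apply: h.
Qed.

Lemma isU_root u N : (0 < N)%N -> u ^+ N = 1 -> isU u.
Proof.
move=> N0 uN; have u0 : u != 0.
  by apply/eqP=> u0; move: uN; rewrite u0 expr0n gtn_eqF //= => /eqP; rewrite eq_sym oner_eq0.
apply/and3P; split=> //; apply: (Aint_unity_root N0); rewrite unity_rootE.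
  by rewrite uN.
by rewrite exprVn uN invr1.
Qed.

Lemma geoA (z : algC) k : z \in Aint -> z != 1 -> (1 - z ^+ k) / (1 - z) \in Aint.
Proof.
move=> za z1.
have t0 : 1 - z != 0 by rewrite subr_eq0 eq_sym.
have -> : 1 - z ^+ k = (1 - z) * \sum_(i < k) z ^+ i.
  apply: (can_inj (@opprK _)); rewrite opprB -mulNr opprB subrX1 //.
by rewrite mulrC mulKf // rpred_sum // => i _; rewrite rpredX.
Qed.

Lemma unit_ratio (q k : nat) (z : algC) : prime q -> z ^+ q = 1 -> z != 1 ->
  (0 < k < q)%N -> (z ^+ k != 1) && isU ((1 - z ^+ k) / (1 - z)).
Proof.
move=> pq zq z1 /andP[k0 kq].
have q0 : (0 < q)%N by apply: prime_gt0.
have za : z \in Aint by apply: (Aint_unity_root q0); rewrite unity_rootE zq.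
have g1 : gcdn k q = 1%N.
  apply/eqP; rewrite gcdnC -/(coprime q k) prime_coprime //.
  by apply/negP => /dvdn_leq; lia.
case: (egcdnP q k0) => km kn hk _.
rewrite g1 in hk.
have zk : (z ^+ k) ^+ km = z.
  by rewrite -exprM mulnC hk exprD mulnC exprM zq expr1n mul1r expr1.
have zk1 : z ^+ k != 1 by apply: contra z1 => /eqP e; rewrite -zk e expr1n.
rewrite zk1 /=.
have t0 : 1 - z != 0 by rewrite subr_eq0 eq_sym.
have s0 : 1 - z ^+ k != 0 by rewrite subr_eq0 eq_sym.
apply/and3P; split.
- by rewrite mulf_neq0 ?invr_eq0.
- exact: geoA.
- rewrite invf_div -{1}zk; apply: geoA => //; by rewrite rpredX.
Qed.

Lemma prim_of_prime q (z : algC) : prime q -> z ^+ q = 1 -> z != 1 -> q.-primitive_root z.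
Proof.
move=> pq zq z1.
have [m pm mq] := prim_order_exists (prime_gt0 pq) zq.
case/primeP: pq => _ /(_ m mq) /orP[] /eqP me; last by rewrite -me.
by move: (prim_expr_order pm); rewrite me expr1 => e; rewrite e eqxx in z1.
Qed.

Lemma prod_formula q (z : algC) : prime q -> z ^+ q = 1 -> z != 1 ->
  (q%:R : algC) = \prod_(k < q.-1) (1 - z ^+ k.+1).
Proof.
move=> pq zq z1; have pz := prim_of_prime _ _ pq zq z1.
have q0 := prime_gt0 pq.
have F := factor_Xn_sub_1 pz.
rewrite -(prednK q0) big_nat_recl // expr0 subrX1 in F.
rewrite -polyC1 in F.
have X0 : 'X - (1 : algC)%:P != 0 by rewrite polyXsubC_eq0.
move/(mulfI X0) : F => F.
have H := congr1 (fun p => p.[1]) F; rewrite /= horner_prod horner_sum in H.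
have e1 : \sum_(i < q.-1.+1) ('X^i).[1] = (q%:R : algC).
  rewrite (eq_bigr (fun _ => 1)); last by move=> i _; rewrite hornerXn expr1n.
  by rewrite sumr_const card_ord prednK.
have e2 : \prod_(0 <= i < q.-1) ('X - (z ^+ i.+1)%:P).[1] = \prod_(k < q.-1) (1 - z ^+ k.+1).
  by rewrite big_mkord; apply: eq_bigr => i _; rewrite hornerD hornerN hornerX hornerC.
by rewrite -e1 -e2 H.
Qed.

Lemma prod_split q m (z : algC) : q = (m.*2).+1 -> z ^+ q = 1 ->
  \prod_(k < q.-1) (1 - z ^+ k.+1) =
  (\prod_(k < m) (1 - z ^+ k.+1)) ^+ 2 * \prod_(k < m) (- z ^+ (q - k.+1)).
Proof.
move=> qm zq.
have -> : q.-1 = (m + m)%N by rewrite qm /= addnn.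
rewrite big_split_ord /=.
rewrite [X in _ * X = _](reindex_inj rev_ord_inj) /=.
have -> : \prod_(j < m) (1 - z ^+ (m + (m - j.+1)).+1) =
          \prod_(j < m) ((- z ^+ (q - j.+1)) * (1 - z ^+ j.+1)).
  apply: eq_bigr => j _.
  have hj : (j < m)%N := ltn_ord j.
  have -> : (m + (m - j.+1)).+1 = (q - j.+1)%N by rewrite qm; lia.
  rewrite mulrBr mulr1 mulNr -exprD.
  have -> : (q - j.+1 + j.+1)%N = q by rewrite qm; lia.
  by rewrite zq opprK addrC.
rewrite big_split /=; ring.
Qed.

Lemma negpow (z : algC) q e : z ^+ q = 1 -> (- z ^+ e) ^+ (2 * q) = 1.
Proof.
move=> zq; rewrite exprM sqrrN -exprM -exprM.
by rewrite mulnA [(e * 2 * q)%N]mulnC exprM zq expr1n.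
Qed.

Lemma core (q : nat) (z eta X N : algC) : prime q -> odd q -> z ^+ q = 1 -> z != 1 ->
  N != 0 -> X != 0 ->
  eta ^+ 2 * (- N * q%:R * z ^+ 2 / (1 - z ^+ 2) ^+ 2) = 1 ->
  X ^+ 2 = N * ((1 - z) ^+ (q - 3)./2) ^+ 2 -> assoc eta^-1 X.
Proof.
move=> pq oq zq z1 N0 X0 Heta HX.
set m := q./2.
have qm : q = (m.*2).+1 by rewrite -[LHS](odd_double_half q) oq add1n.
have q2 : (2 < q)%N.
  have := prime_gt1 pq; rewrite qm => h; rewrite -!muln2; move: h; rewrite -muln2; lia.
have m1 : (0 < m)%N by move: q2; rewrite qm -muln2; lia.
have hm : (q - 3)./2 = m.-1.
  have -> : (q - 3)%N = (m.-1).*2 by rewrite qm -!muln2; lia.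
  by rewrite doubleK.
rewrite hm in HX.
have eta0 : eta != 0.
  by apply/eqP => e0; move: Heta; rewrite e0 expr0n /= mul0r => /eqP; rewrite eq_sym oner_eq0.
set t := 1 - z; set s := 1 - z ^+ 2.
have t0 : t != 0 by rewrite /t subr_eq0 eq_sym.
have /andP[z2 Us] := unit_ratio _ 2 _ pq zq z1 q2.
have s0 : s != 0 by rewrite /s subr_eq0 eq_sym.
set R := \prod_(k < m) ((1 - z ^+ k.+1) / t).
have UR : isU R.
  apply: isU_prod => k; have hk := ltn_ord k.
  have hk2 : (0 < k.+1 < q)%N by apply/andP; split => //; rewrite qm -muln2; lia.
  have := unit_ratio _ _ _ pq zq z1 hk2.
  by case/andP.
have Uts : isU (t / s) by rewrite -invf_div; apply: isU_inv.
set c := R * (t / s).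
have Uc : isU c by apply: isU_mul.
have c0 : c != 0 by case/and3P: Uc.
have R0 : R != 0 by case/and3P: UR.
set W := \prod_(k < m) (- z ^+ (q - k.+1)).
have hq : (q%:R : algC) = (R * t ^+ m) ^+ 2 * W.
  rewrite (prod_formula _ _ pq zq z1) (prod_split _ _ _ qm zq).
  by rewrite /R prodf_div prodr_const card_ord divfK // expf_neq0.
set u := t ^+ m.-1.
have u0 : u != 0 by rewrite expf_neq0.
have tm : t ^+ m = u * t by rewrite /u -exprSr prednK.
set K := - N * q%:R * z ^+ 2 / s ^+ 2.
have E1 : eta^-1 ^+ 2 = K.
  rewrite exprVn -[K](mulKf (expf_neq0 2 eta0)) Heta mulr1 //.
set r := eta^-1 / X.
have key : (r / c) ^+ 2 = - W * z ^+ 2.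
  rewrite /r /c !expr_div_n E1 HX /K hq tm -/u.
  field; rewrite ?N0 ?u0 ?t0 ?s0 ?R0 //.
have Urc : isU (r / c).
  apply: (isU_root _ (2 * (2 * q))); first by rewrite !muln_gt0 (prime_gt0 pq).
  rewrite exprM key exprMn.
  have -> : (z ^+ 2) ^+ (2 * q) = 1 by rewrite -exprM mulnA mulnC exprM zq expr1n.
  rewrite mulr1 exprM sqrrN -exprM.
  rewrite /W -prodrXl big1 // => k _; exact: negpow.
have Ur : isU r by rewrite -[r](divfK c0); apply: isU_mul.
case/and3P: Ur => r0 ra ri.
apply/and4P; split => //; first by rewrite invr_eq0.
by rewrite -invf_div.
Qed.

Lemma br2 (A : algC) i : A != 0 ->
  bracket_e A i ^+ 2 = ((A ^+ 4) ^+ i.+1 + (A ^+ 4) ^- i.+1 - 2) / (A ^+ 2 - A ^- 2) ^+ 2.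
Proof.
move=> A0; rewrite /bracket_e /qint exprMn sqrr_sign mul1r expr_div_n; congr (_ / _).
set u := A ^+ (2 * i.+1).
have u0 : u != 0 by rewrite expf_neq0.
have h1 : (A ^+ 4) ^+ i.+1 = u ^+ 2 by rewrite /u -!exprM; congr (A ^+ _); lia.
rewrite h1; field; exact: u0.
Qed.

Lemma geo0 (y : algC) n : y ^+ n = 1 -> y != 1 -> \sum_(k < n) y ^+ k = 0.
Proof.
move=> yn y1; have : (y - 1) * \sum_(k < n) y ^+ k = 0 by rewrite -subrX1 yn subrr.
by move/eqP; rewrite mulf_eq0 subr_eq0 (negPf y1) => /eqP.
Qed.

Lemma invpow (y : algC) p k : (0 < p)%N -> y ^+ p = 1 -> (k <= p)%N -> y ^- k = y ^+ (p - k).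
Proof.
move=> p0 yp kp; have y0 : y != 0.
  by apply/eqP => y0; move: yp; rewrite y0 expr0n gtn_eqF //= => /eqP; rewrite eq_sym oner_eq0.
apply: (mulIf (expf_neq0 k y0)); rewrite mulVf ?expf_neq0 // -exprD subnK //.
Qed.

Lemma pairsum (F : nat -> algC) m :
  \sum_(j < m) (F (2 * j)%N + F (2 * j).+1) = \sum_(k < m.*2) F k.
Proof.
elim: m => [|m IH]; first by rewrite !big_ord0.
rewrite big_ord_recr /= IH doubleS !big_ord_recr /= addrA -muln2 mulnC.
by [].
Qed.

Lemma sum_odd (y : algC) p m : y ^+ p = 1 -> y != 1 -> p = (m.*2).+1 ->
  \sum_(j < m) (y ^+ (2 * j).+1 + y ^- (2 * j).+1) = -1.
Proof.
move=> yp y1 pm.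
have p0 : (0 < p)%N by rewrite pm.
rewrite big_split /=.
have -> : \sum_(j < m) y ^- (2 * j).+1 = \sum_(j < m) y ^+ (2 * j).+2.
  rewrite (reindex_inj rev_ord_inj) /=; apply: eq_bigr => j _.
  have hj := ltn_ord j.
  rewrite (invpow _ _ _ p0 yp); last by rewrite pm; lia.
  congr (y ^+ _); rewrite pm; lia.
rewrite -big_split /= (pairsum (fun k => y ^+ k.+1) m).
have := geo0 _ _ yp y1; rewrite pm big_ord_recl expr0 => /eqP.
by rewrite addrC addr_eq0 => /eqP <-; apply: eq_bigr.
Qed.

Lemma sum_even (y : algC) q : y ^+ q = 1 -> y != 1 -> (0 < q)%N ->
  \sum_(i < q - 1) (y ^+ i.+1 + y ^- i.+1) = -2.
Proof.
move=> yq y1 q0.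
have s1 : \sum_(i < q - 1) y ^+ i.+1 = -1.
  have yq' : y ^+ (q - 1).+1 = 1 by rewrite subn1 prednK.
  have := geo0 _ _ yq' y1; rewrite big_ord_recl expr0 => /eqP.
  by rewrite addrC addr_eq0 => /eqP <-; apply: eq_bigr.
rewrite big_split /= s1.
have -> : \sum_(i < q - 1) y ^- i.+1 = \sum_(i < q - 1) y ^+ i.+1.
  rewrite (reindex_inj rev_ord_inj) /=; apply: eq_bigr => j _.
  have hj := ltn_ord j.
  rewrite (invpow _ _ _ q0 yq); last by lia.
  congr (y ^+ _); lia.
by rewrite s1 -opprD.
Qed.

Lemma Omega_odd_val (A : algC) p m : A != 0 -> (A ^+ 4) ^+ p = 1 -> A ^+ 4 != 1 ->
  p = (m.*2).+1 ->
  \sum_(j < m) bracket_e A (2 * j) ^+ 2 = - p%:R / (A ^+ 2 - A ^- 2) ^+ 2.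
Proof.
move=> A0 yp y1 pm.
under eq_bigr do rewrite br2 //.
rewrite -mulr_suml sumrB (sum_odd _ _ _ yp y1 pm) sumr_const card_ord.
congr (_ / _); rewrite pm -mulr_natl -[(m.*2).+1]addn1 natrD -muln2 natrM; ring.
Qed.

Lemma Omega_even_val (A : algC) q : A != 0 -> (A ^+ 4) ^+ q = 1 -> A ^+ 4 != 1 ->
  (0 < q)%N ->
  \sum_(i < q - 1) bracket_e A i ^+ 2 = - (2 * q)%:R / (A ^+ 2 - A ^- 2) ^+ 2.
Proof.
move=> A0 yq y1 q0.
under eq_bigr do rewrite br2 //.
rewrite -mulr_suml sumrB (sum_even _ _ yq y1 q0) sumr_const card_ord.
congr (_ / _); rewrite -[2 *+ (q - 1)]mulr_natl natrB // natrM; ring.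
Qed.

Lemma conv (x z Q N : algC) : x != 0 -> x ^+ 2 != 1 -> z ^+ 2 = x ^+ 2 ->
  - (N * Q) / (x - x^-1) ^+ 2 = - N * Q * z ^+ 2 / (1 - z ^+ 2) ^+ 2.
Proof.
move=> x0 x21 zx; rewrite zx.
have s0 : 1 - x ^+ 2 != 0 by rewrite subr_eq0 eq_sym.
by field; rewrite s0 x0 -expr2 subr_eq0 x21.
Qed.

Theorem lemma2p4 (p : nat) (eta : algC) (Heta : eta ^+ 2 * Omega p = 1) :
  (prime p -> odd p ->
     assoc eta^-1 ((1 - Ap p ^+ 2) ^+ ((p - 3)./2))) /\
  (forall q : nat, prime q -> odd q -> p = (2 * q)%N ->
     assoc eta^-1 (sqrtC 2 * (1 + alpha p ^+ 4) ^+ ((q - 3)./2))).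
Proof.
split.
- move=> pp op.
  have p3 : (2 < p)%N by move: (prime_gt1 pp) op; case: p {Heta pp} => [|[|[|]]].
  have n5 : (5 < 2 * p)%N by lia.
  have ev : ~~ odd (2 * p) by rewrite oddM.
  have a8 := alpha8 _ n5 ev; rewrite -/(alpha p) in a8.
  set a := alpha p in a8 *.
  have an : a ^+ (2 * p) = -1 by rewrite /a /alpha; apply: rootCK; lia.
  have a0 : a != 0.
    apply/eqP => a0; move: an; rewrite a0 expr0n (_ : (2 * p == 0)%N = false); last by apply/eqP; lia.
    by move/eqP; rewrite eq_sym oppr_eq0 oner_eq0.
  set z := a ^+ 4.
  have z0 : z != 0 by rewrite expf_neq0.
  have zp : z ^+ p = 1.
    have e : (4 * p = 2 * p * 2)%N by lia.
    by rewrite /z -exprM e exprM an sqrrN expr1n.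
  have a8z : a ^+ 8 = z ^+ 2 by rewrite /z -exprM.
  have z21 : z ^+ 2 != 1 by rewrite -a8z.
  have z1 : z != 1 by apply: contra z21 => /eqP ->; rewrite expr1n.
  have Az : Ap p ^+ 2 = z by rewrite /Ap -exprM.
  have A4 : Ap p ^+ 4 = z ^+ 2 by rewrite /Ap -!exprM.
  have A0 : Ap p != 0 by rewrite /Ap expf_neq0.
  set m := p./2.
  have pm : p = (m.*2).+1 by rewrite -[LHS](odd_double_half p) op add1n.
  have Om : Omega p = - p%:R / (z - z^-1) ^+ 2.
    rewrite /Omega op (_ : (p.-1)./2 = m); last by rewrite pm /= doubleK.
    rewrite (Omega_odd_val _ _ _ A0 _ _ pm); last by rewrite A4.
      by rewrite Az.
    by rewrite A4 exprAC zp expr1n.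
  have s0 : 1 - z ^+ 2 != 0 by rewrite subr_eq0 eq_sym.
  have Heta' : eta ^+ 2 * (- 1 * p%:R * z ^+ 2 / (1 - z ^+ 2) ^+ 2) = 1.
    by rewrite -(conv _ _ _ _ z0 z21 (erefl _)) mul1r -Om.
  rewrite Az; apply: (core p z eta _ 1 pp op zp z1 (oner_neq0 _)).
  - by rewrite expf_neq0 // subr_eq0 eq_sym.
  - exact: Heta'.
  - by rewrite mul1r.
- move=> q pq oq pq2.
  have q3 : (2 < q)%N by move: (prime_gt1 pq) oq; case: q {pq pq2} => [|[|[|]]].
  have n5 : (5 < 2 * p)%N by lia.
  have ev : ~~ odd (2 * p) by rewrite oddM.
  have a8 := alpha8 _ n5 ev; rewrite -/(alpha p) in a8.
  set a := alpha p in a8 *.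
  have an : a ^+ (2 * p) = -1 by rewrite /a /alpha; apply: rootCK; lia.
  have a0 : a != 0.
    apply/eqP => a0; move: an; rewrite a0 expr0n (_ : (2 * p == 0)%N = false); last by apply/eqP; lia.
    by move/eqP; rewrite eq_sym oppr_eq0 oner_eq0.
  set x := a ^+ 4.
  have x0 : x != 0 by rewrite expf_neq0.
  have xq : x ^+ q = -1.
    have e : (4 * q = 2 * p)%N by lia.
    by rewrite /x -exprM e an.
  set z := - x.
  have zq : z ^+ q = 1.
    by rewrite /z exprNn xq -signr_odd oq expr1 mulN1r opprK.
  have a8x : a ^+ 8 = x ^+ 2 by rewrite /x -exprM.
  have x21 : x ^+ 2 != 1 by rewrite -a8x.
  have zx : z ^+ 2 = x ^+ 2 by rewrite /z sqrrN.
  have z21 : z ^+ 2 != 1 by rewrite zx.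
  have z1 : z != 1 by apply: contra z21 => /eqP ->; rewrite expr1n.
  have Az : Ap p ^+ 2 = x by rewrite /Ap -exprM.
  have A4 : Ap p ^+ 4 = z ^+ 2 by rewrite zx /Ap -!exprM.
  have A0 : Ap p != 0 by rewrite /Ap expf_neq0.
  have Om : Omega p = - (2 * q)%:R / (x - x^-1) ^+ 2.
    have op : odd p = false by rewrite pq2 oddM.
    rewrite /Omega op (_ : (p./2 - 1 = q - 1)%N); last by rewrite pq2 mul2n doubleK.
    rewrite (Omega_even_val _ _ A0); first by rewrite Az.
    - by rewrite A4 exprAC zq expr1n.
    - by rewrite A4.
    - lia.
  have Heta' : eta ^+ 2 * (- 2%:R * q%:R * z ^+ 2 / (1 - z ^+ 2) ^+ 2) = 1.
    by rewrite -(conv _ _ _ _ x0 x21 zx) -natrM -Om.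
  have -> : 1 + alpha p ^+ 4 = 1 - z by rewrite /z opprK.
  apply: (core q z eta _ 2%:R pq oq zq z1).
  - by rewrite pnatr_eq0.
  - by rewrite mulf_neq0 ?sqrtC_eq0 ?pnatr_eq0 // expf_neq0 // subr_eq0 eq_sym.
  - exact: Heta'.
  - by rewrite exprMn sqrtCK.
Qed.
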